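(* Let $M\subset[0,1)$ be measurable with $M\cap s(M)=\emptyset$ and $M\cup s(M)=[0,1)$ up to null sets, $m_0=\operatorname{Per}(\chi_M)$, and let $F\subset\mathbb{R}$, $\hat\varphi=\chi_F$, satisfy $\hat\varphi(x)=\prod_{n\ge1}m_0(x/2^n)$, i.e. $F=\bigcap_{n\ge1}2^n\operatorname{Per}(M)$. The following are equivalent: (i) $\lim_{n\to\infty}\hat\varphi(x/2^n)=1$ for a.e. $x\in\mathbb{R}$; (ii) $\bigcup_{n\ge1}2^nF=\mathbb{R}$ up to measure zero; (iii) $\lim_{n\to\infty}m_0(x/2^n)=1$ for a.e. $x\in\mathbb{R}$; (iv) $\lim_{n\to\infty}m_0(\tau_0^nx)=1$ and $\lim_{n\to\infty}m_0(\tau_1^nx)=1$ for a.e. $x\in[0,1)$; (v) for a.e. $x\in[0,1)$, the chosen paths satisfy $\omega(\tau_0^nx)=000\cdots$ and $\omega(\tau_1^nx)=111\cdots$ for all sufficiently large $n$; (vi) for a.e. $x\in[0,1)$, the set $A(x)$ contains the words $\omega_1\cdots\omega_n000\cdots$ and $\omega_1\cdots\omega_n111\cdots$ for all $n\ge0$ and all $\omega_1,\dots,\omega_n\in\{0,1\}$.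
   Context: On $[0,1)$: $\tau_0(x)=x/2$, $\tau_1(x)=(x+1)/2$, $s(x)=(x+\frac12)\bmod1$. $\operatorname{Per}(A)=\bigcup_{k\in\mathbb{Z}}(A+k)$, $\operatorname{Per}(\chi_M)(x)=\sum_k\chi_M(x+k)$. Chosen path: for (a.e.) $x\in[0,1)$ exactly one of $\tau_0x,\tau_1x$ lies in $M$; let $\omega_1$ be the digit with $\tau_{\omega_1}x\in M$ and inductively $\omega_{n+1}$ the unique digit with $\tau_{\omega_{n+1}}\tau_{\omega_n}\cdots\tau_{\omega_1}x\in M$; $\omega(x)=\omega_1\omega_2\cdots\in\{0,1\}^{\mathbb{N}}$. $A(x)=\{\eta_1\cdots\eta_n\,\omega(\tau_{\eta_n}\cdots\tau_{\eta_1}x)\mid n\ge0,\ \eta_i\in\{0,1\}\}$. *)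

(* Defs.v *)
From HB Require Import structures.
From mathcomp Require Import all_boot all_order all_algebra.
From mathcomp Require Import all_classical all_reals all_analysis.
Set Implicit Arguments. Unset Strict Implicit. Unset Printing Implicit Defensive.
Import Order.TTheory GRing.Theory Num.Theory.
Local Open Scope classical_set_scope.
Local Open Scope ring_scope.

Section Defs.
Variable R : realType.

(* tau_b x = (x + b)/2, b in {0,1}; digits are booleans, false = 0, true = 1 *)
Definition tau (b : bool) (x : R) : R := (x + (b : nat)%:R) / 2.
Definition tau0 : R -> R := tau false.
Definition tau1 : R -> R := tau true.

Definition shalf (x : R) : R :=
  (x + 2^-1) - (Num.floor (x + 2^-1))%:~R.

Definition Per (A : set R) : set R :=
  \bigcup_(k in [set: int]) [set y + k%:~R | y in A].

Definition Per_fun (M : set R) (x : R) : \bar R :=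
  (\esum_(k in [set: int]) ((\1_M (x + k%:~R) : R)%:E))%E.

Definition dil (c : R) (A : set R) : set R := [set c * y | y in A].

Definition Fset (M : set R) : set R :=
  \bigcap_(n in [set n : nat | (0 < n)%N]) dil (2 ^+ n) (Per M).

Definition phihat (M : set R) : R -> R := \1_(Fset M).

(* The chosen digit at y: the digit b with tau_b y in M
   (the unique one for a.e. y; ties are broken towards 1). *)
Definition chosen_digit (M : set R) (y : R) : bool := ~~ `[< M (tau0 y) >].

Fixpoint path_state (M : set R) (x : R) (n : nat) : R :=
  match n with
  | 0 => x
  | n.+1 => let y := path_state M x n in tau (chosen_digit M y) y
  end.

(* omega(x) = omega_1 omega_2 ...; (omega M x) n is omega_{n+1} *)
Definition omega (M : set R) (x : R) : nat -> bool :=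
  fun n => chosen_digit M (path_state M x n).

Definition wcat (eta : seq bool) (w : nat -> bool) : nat -> bool :=
  fun k => if (k < size eta)%N then nth false eta k else w (k - size eta)%N.

Definition tau_word (eta : seq bool) (x : R) : R :=
  foldl (fun y b => tau b y) x eta.

Definition Aset (M : set R) (x : R) : set (nat -> bool) :=
  [set wcat eta (omega M (tau_word eta x)) | eta in [set: seq bool]].

End Defs.

Arguments tau {R}. Arguments tau0 {R}. Arguments tau1 {R}. Arguments shalf {R}.

(* Main.v *)
Require Import Defs.
From HB Require Import structures.
From mathcomp Require Import all_boot all_order all_algebra.
From mathcomp Require Import all_classical all_reals all_analysis.
Import Order.TTheory GRing.Theory Num.Theory.
Import numFieldNormedType.Exports.
From mathcomp Require Import ring lra zify.
Local Open Scope classical_set_scope.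
Local Open Scope ring_scope.

Section Aff.
Variable R : realType.
Variables (a b : R).
Definition aff (x : measurableTypeR R) : measurableTypeR R := a * x + b.

Lemma aff_mf : measurable_fun [set: measurableTypeR R] aff.
Proof.
apply: measurable_realfun.continuous_measurable_fun => x.
apply: continuousD; last exact: cvg_cst.
apply: continuousM; [exact: cvg_cst| exact: cvg_id].
Qed.

Definition affpf (A : set (measurableTypeR R)) : \bar R := (@lebesgue_measure R) (aff @^-1` A).

Let affpf0 : affpf set0 = 0%E.
Proof. by rewrite /affpf preimage_set0 measure0. Qed.

Let affpf_ge0 A : (0 <= affpf A)%E.
Proof. exact: measure_ge0. Qed.

Let affpf_sigma_additive : semi_sigma_additive affpf.
Proof.
move=> F mF tF mUF; rewrite /affpf preimage_bigcup.
apply: measure_semi_sigma_additive.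
- by move=> n; rewrite -[X in measurable X]setTI; exact: aff_mf.
- apply/trivIsetP => /= i j _ _ ij; rewrite -preimage_setI.
  by move/trivIsetP : tF => /(_ _ _ _ _ ij) ->//; rewrite preimage_set0.
- by rewrite -preimage_bigcup -[X in measurable X]setTI; exact: aff_mf.
Qed.

HB.instance Definition _ := isMeasure.Build _ _ _
  affpf affpf0 affpf_ge0 affpf_sigma_additive.
End Aff.
Arguments aff {R}. Arguments affpf {R}.

Section S.
Variable R : realType.

Lemma negl_aff (a b : R) (N : set R) : 0 < a ->
  (@lebesgue_measure R).-negligible N ->
  (@lebesgue_measure R).-negligible [set x | N (a * x + b)].
Proof.
move=> a0 [A [mA A0 NA]].
have key := @lebesgue_measure_unique R (mscale (NngNum (ltW a0)) (affpf a b)).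
have H : forall X : set R, ocitv X -> lebesgue_measure X =
    mscale (NngNum (ltW a0)) (affpf a b) X.
  move=> _ [[c d] _ <-] /=.
  rewrite /mscale /=; unfold affpf.
  have e1 x : ((c - b) / a < x) = (c < a * x + b) by rewrite ltr_pdivrMr // ltrBlDr mulrC.
  have e2 x : (x <= (d - b) / a) = (a * x + b <= d) by rewrite ler_pdivlMr // mulrC -(lerD2r b) subrK.
  have -> : aff a b @^-1` `]c, d]%classic = `](c - b) / a, (d - b) / a]%classic.
    by apply/seteqP; split => x; rewrite /= /aff !in_itv /= e1 e2.
  have L1 := lebesgue_measure_itv `]c, d].
  have L2 := lebesgue_measure_itv `](c - b) / a, (d - b) / a].
  simpl in L1, L2. rewrite L1 L2. 
  rewrite !lte_fin ltr_pM2r ?invr_gt0 // ltrD2r.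
  case: ifP => cd; last by rewrite mule0.
  rewrite -!EFinD -EFinM; congr (_%:E).
  by field; rewrite gt_eqF.
exists (aff a b @^-1` A); split.
- by rewrite -[X in measurable X]setTI; apply: aff_mf.
- have := key H A mA; rewrite A0 /mscale /affpf /=.
  move/esym/eqP; rewrite mule_eq0 eqe gt_eqF //= => /eqP //.
- by move=> x /= /NA.
Qed.
End S.

Section Base.
Variable R : realType.

Definition ev (p : nat -> Prop) := exists N, forall n, (N <= n)%N -> p n.

Lemma cvg01 (p : nat -> bool) :
  ((fun n => (p n)%:R : R) @ \oo --> (1:R)) <-> ev p.
Proof.
split.
- move/cvgrPdist_lt => /(_ 1 ltr01) [N _ HN]; exists N => n Nn.
  by have := HN n Nn; case: (p n) => //=; rewrite subr0 normr1 ltxx.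
- move=> [N HN]; apply: cvg_near_cst; exists N => // n /= Nn.
  by rewrite HN.
Qed.

Lemma cvg01e (p : nat -> bool) :
  ((fun n => ((p n)%:R : R)%:E) @ \oo --> (1%E : \bar R)) <-> ev p.
Proof.
rewrite fine_cvgP; split.
- by move=> [_]; rewrite -cvg01.
- move=> h; split; first by apply: nearW.
  by rewrite -cvg01 in h.
Qed.


Lemma int_small (k : int) : (-1 : R) < k%:~R -> (k%:~R : R) < 1 -> k = 0.
Proof.
move=> h1 h2.
have a : (k < 1)%R by rewrite -(ltrz1 R).
have b : (-1 < k)%R.
  by rewrite -(ltr_int R) (_ : (-1)%:~R = -1 :> R) // mulrN1z.
lia.
Qed.

Variable M : set R.
Hypothesis Msub : M `<=` `[0, 1[%classic.

Lemma in01 (y : R) : `[0, 1[%classic y <-> 0 <= y < 1.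
Proof. by rewrite /= in_itv /=. Qed.

Lemma PerP z : Per M z <-> exists k : int, M (z - k%:~R).
Proof.
split.
- by move=> [k _ [y My <-]]; exists k; rewrite addrK.
- by move=> [k Mk]; exists k => //; exists (z - k%:~R) => //; rewrite subrK.
Qed.

Lemma Per_shift z (k : int) : Per M (z + k%:~R) <-> Per M z.
Proof.
rewrite !PerP; split => -[j Mj].
- by exists (j - k); move: Mj; congr M; rewrite intrB; ring.
- by exists (j + k); move: Mj; congr M; rewrite intrD; ring.
Qed.

Lemma M_uniq (y z : R) : M y -> M z -> (exists k : int, z = y + k%:~R) -> z = y.
Proof.
move=> /Msub /in01 /andP[y0 y1] /Msub /in01 /andP[z0 z1] [k zk].
suff k0 : k = 0 by rewrite zk k0 addr0.
by apply: int_small; lra.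
Qed.

Lemma Per01 z : 0 <= z < 1 -> Per M z <-> M z.
Proof.
move=> /andP[z0 z1]; rewrite PerP; split; last by move=> Mz; exists 0; rewrite subr0.
move=> [k Mk]; have := Msub _ Mk; rewrite in01 => /andP[a b].
suff k0 : k = 0 by move: Mk; rewrite k0 subr0.
by apply: int_small; lra.
Qed.

Lemma Per_funE x : Per_fun M x = (\1_(Per M) x)%:E.
Proof.
rewrite /Per_fun indicE; case: (pselect (Per M x)) => [Px|nPx].
- rewrite mem_set //; have [k Mk] := (PerP x).1 Px.
  rewrite (esumID [set - k]); last by move=> i _; rewrite lee_fin.
  rewrite setTI esum_set1; last by rewrite lee_fin.
  rewrite esum1 ?adde0; first by rewrite indicE mem_set // intrN.
  move=> i [_ /= ik]; rewrite indicE memNset //= => Mi.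
  apply: ik; apply: (@intr_inj R); rewrite intrN.
  have := @M_uniq (x - k%:~R) (x + i%:~R) Mk Mi.
  have -> : x + i%:~R = x - k%:~R + (i + k)%:~R by rewrite intrD; ring.
  move=> /(_ (ex_intro _ (i + k) erefl)); rewrite intrD => h.
  lra.
- rewrite memNset // esum1 // => i _; rewrite indicE memNset //= => Mi.
  by apply: nPx; apply/PerP; exists (- i); rewrite intrN opprK.
Qed.

Lemma tauE b (x : R) : tau b x = x / 2 + (b : nat)%:R / 2.
Proof. by rewrite /tau mulrDl. Qed.

Lemma iter_tau0 n (x : R) : iter n tau0 x = x / 2 ^+ n.
Proof.
elim: n => [|n IH]; first by rewrite expr0 divr1.
rewrite iterS IH /tau0 /tau /= addr0 exprS invfM; field.
by rewrite expf_neq0.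
Qed.

Lemma iter_tau1 n (x : R) : iter n tau1 x = (x - 1) / 2 ^+ n + 1.
Proof.
elim: n => [|n IH]; first by rewrite expr0 divr1 subrK.
rewrite iterS IH /tau1 /tau /= exprS invfM; field.
by rewrite expf_neq0.
Qed.

Lemma tau01 b (x : R) : 0 <= x < 1 -> 0 <= tau b x < 1.
Proof. by case: b; rewrite /tau /=; lra. Qed.

Lemma tau_word_nseq n b (x : R) : tau_word (nseq n b) x = iter n (tau b) x.
Proof.
elim: n x => [//|n IH] x; rewrite /tau_word /= -/(tau_word _ _) IH.
by rewrite -iterSr.
Qed.

Lemma tau_word_aff (w : seq bool) : exists a c : R, 0 < a /\ forall x, tau_word w x = a * x + c.
Proof.
elim/last_ind: w => [|w b [a [c [a0 H]]]].
  by exists 1, 0; split => // x; rewrite mul1r addr0.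
exists (a / 2), (c / 2 + (b : nat)%:R / 2); split; first by rewrite divr_gt0.
move=> x; rewrite /tau_word -cats1 foldl_cat /= -/(tau_word _ _) H tauE; ring.
Qed.

Lemma tau_word01 w (x : R) : 0 <= x < 1 -> 0 <= tau_word w x < 1.
Proof.
elim/last_ind: w => [//|w b IH] x01.
by rewrite /tau_word -cats1 foldl_cat /= -/(tau_word _ _); apply: tau01; apply: IH.
Qed.

Lemma path_stateS x n :
  path_state M x n.+1 = path_state M (tau (chosen_digit M x) x) n.
Proof.
elim: n x => [//|n IH] x.
by rewrite /= -IH.
Qed.

Lemma omegaS x n : omega M x n.+1 = omega M (tau (chosen_digit M x) x) n.
Proof. by rewrite /omega path_stateS. Qed.

Lemma omega0 x : omega M x 0 = chosen_digit M x.
Proof. by []. Qed.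

Lemma omega_const b y :
  omega M y = (fun _ => b) <-> forall k, chosen_digit M (iter k (tau b) y) = b.
Proof.
split.
- move=> H k; elim: k y H => [|k IH] y H; first by rewrite -omega0 H.
  have cb : chosen_digit M y = b by rewrite -omega0 H.
  rewrite iterSr; apply: IH; apply/funext => n.
  by have := omegaS y n; rewrite cb H /= => <-.
- move=> H; apply/funext => n; elim: n y H => [|n IH] y H; first exact: (H 0%N).
  rewrite omegaS (H 0%N); apply: IH => k.
  by rewrite -iterSr.
Qed.

Lemma cd_false y : chosen_digit M y = false <-> M (tau0 y).
Proof. by rewrite /chosen_digit; case: asboolP => //=; split. Qed.

Lemma cd_true y : chosen_digit M y = true <-> ~ M (tau0 y).
Proof. by rewrite /chosen_digit; case: asboolP => //=; split. Qed.

End Base.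

Section Main.
Variable R : realType.
Local Notation leb := (@lebesgue_measure R).

Lemma aeE (P : R -> Prop) : {ae leb, forall x, P x} <-> leb.-negligible (~` [set x | P x]).
Proof. by []. Qed.

Lemma negl_tw (w : seq bool) (N : set R) : leb.-negligible N ->
  leb.-negligible [set x | N (tau_word w x)].
Proof.
move=> hN; have [a [c [a0 H]]] := tau_word_aff R w.
apply: negligibleS (@negl_aff R a c N a0 hN) => x /=; by rewrite H.
Qed.

Lemma ev_ext (p q : nat -> Prop) : (forall n, p n <-> q n) -> ev p <-> ev q.
Proof. by move=> h; split => -[N H]; exists N => n /H /h. Qed.

Lemma ev_add (p : nat -> Prop) k : ev (fun n => p (n + k)%N) <-> ev p.
Proof.
split => -[N H].
- exists (N + k)%N => n Nn; have := H (n - k)%N; rewrite subnK; last lia.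
  by apply; lia.
- by exists N => n Nn; apply: H; lia.
Qed.

Lemma ae_set (P : R -> Prop) (B : set R) : (forall x, P x <-> ~ B x) ->
  ({ae leb, forall x, P x} <-> leb.-negligible B).
Proof.
move=> H; rewrite aeE; have -> // : ~` [set x | P x] = B.
apply/seteqP; split => x /= h.
- by apply: contrapT; rewrite -H.
- by rewrite H => /(_ h).
Qed.

Variable M : set R.
Hypothesis Msub : M `<=` `[0, 1[%classic.

Definition Bad := [set x : R | ~ ev (fun n => Per M (x / 2 ^+ n))].

Lemma div2D (x : R) m k : x / 2 ^+ m / 2 ^+ k = x / 2 ^+ (m + k).
Proof. by rewrite exprD invfM mulrA. Qed.

Lemma Fset_iff y : Fset M y <-> forall n, (0 < n)%N -> Per M (y / 2 ^+ n).
Proof.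
split.
- move=> H n n0; have [z Pz <-] := H n n0.
  by rewrite [2 ^+ n * z]mulrC mulfK // expf_neq0.
- move=> H n n0; exists (y / 2 ^+ n); first exact: H.
  by rewrite mulrC divfK // expf_neq0.
Qed.

Lemma evF x : ev (fun m => Fset M (x / 2 ^+ m)) <-> ev (fun n => Per M (x / 2 ^+ n)).
Proof.
split => -[N H].
- exists N.+1 => n Nn; have := (Fset_iff _).1 (H N (leqnn N)) (n - N)%N.
  rewrite div2D subnKC; last lia.
  by apply; lia.
- exists N => m Nm; apply/Fset_iff => k k0; rewrite div2D; apply: H; lia.
Qed.

Lemma cupF x : (\bigcup_(n in [set n | (0 < n)%N]) dil (2 ^+ n) (Fset M)) x <->
  ev (fun n => Per M (x / 2 ^+ n)).
Proof.
split.
- move=> [n /= n0 [y Fy <-]]; exists n.+1 => m nm.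
  have := (Fset_iff _).1 Fy (m - n)%N.
  have -> : (2:R) ^+ m = 2 ^+ (m - n) * 2 ^+ n by rewrite -exprD subnK //; lia.
  have -> : 2 ^+ n * y / (2 ^+ (m - n) * 2 ^+ n) = y / 2 ^+ (m - n) :> R.
    by field; rewrite !expf_neq0.
  by apply; lia.
- move=> [N H]; exists N.+1 => //; exists (x / 2 ^+ N.+1).
    by apply/Fset_iff => k k0; rewrite div2D; apply: H; lia.
  by rewrite mulrC divfK // expf_neq0.
Qed.

Lemma i_C : {ae leb, forall x, (fun n : nat => phihat M (x / 2 ^+ n)) @ \oo --> (1 : R)}
  <-> leb.-negligible Bad.
Proof.
apply: ae_set => x; rewrite /Bad /=.
have -> : (fun n : nat => phihat M (x / 2 ^+ n)) =
    (fun n => ((x / 2 ^+ n) \in Fset M)%:R) by apply/funext => n; rewrite /phihat indicE.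
rewrite cvg01 -evF (propext (@ev_ext _ (fun n => Fset M (x / 2 ^+ n)) _)); last first.
  by move=> n; rewrite in_setE.
by split; [move=> h nh|exact: contrapT].
Qed.

Lemma ii_C : leb.-negligible
      (~` \bigcup_(n in [set n : nat | (0 < n)%N]) dil (2 ^+ n) (Fset M))
  <-> leb.-negligible Bad.
Proof.
suff -> : (~` \bigcup_(n in [set n : nat | (0 < n)%N]) dil (2 ^+ n) (Fset M)) = Bad by [].
apply/seteqP; split => x /=.
- by move=> h /cupF.
- by move=> h /cupF.
Qed.

Lemma iii_C : {ae leb, forall x,
      (fun n : nat => Per_fun M (x / 2 ^+ n)) @ \oo --> (1%E : \bar R)}
  <-> leb.-negligible Bad.
Proof.
apply: ae_set => x; rewrite /Bad /=.
have -> : (fun n : nat => Per_fun M (x / 2 ^+ n)) =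
    (fun n => (((x / 2 ^+ n) \in Per M)%:R : R)%:E).
  by apply/funext => n; rewrite Per_funE // indicE.
rewrite cvg01e (propext (@ev_ext _ (fun n => Per M (x / 2 ^+ n)) _)); last first.
  by move=> n; rewrite in_setE.
by split; [move=> h nh|exact: contrapT].
Qed.

Lemma ae_iff (P Q : R -> Prop) : (forall x, P x <-> Q x) ->
  ({ae leb, forall x, P x} <-> {ae leb, forall x, Q x}).
Proof.
move=> H; rewrite !aeE; have -> // : [set x | P x] = [set x | Q x].
by apply/seteqP; split => x /= /H.
Qed.

Lemma cvgPer (f : nat -> R) :
  (fun n => Per_fun M (f n)) @ \oo --> (1%E : \bar R) <-> ev (fun n => Per M (f n)).
Proof.
have -> : (fun n : nat => Per_fun M (f n)) = (fun n => ((f n \in Per M)%:R : R)%:E).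
  by apply/funext => n; rewrite Per_funE // indicE.
rewrite cvg01e; apply: ev_ext => n; by rewrite in_setE.
Qed.

Lemma nnP (P : Prop) : P <-> ~ ~ P.
Proof. by split; [move=> h nh|exact: contrapT]. Qed.

Definition Dp x := `[0, 1[%classic x -> ~ Bad x /\ ~ Bad (x - 1).

Lemma iv_D : {ae leb, forall x : R, `[0, 1[%classic x ->
      (fun n : nat => Per_fun M (iter n (@tau0 R) x)) @ \oo --> (1%E : \bar R) /\
      (fun n : nat => Per_fun M (iter n (@tau1 R) x)) @ \oo --> (1%E : \bar R)}
  <-> {ae leb, forall x, Dp x}.
Proof.
apply: ae_iff => x; rewrite /Dp /Bad /= !cvgPer -!nnP.
have -> : (fun n => Per M (iter n tau0 x)) = (fun n => Per M (x / 2 ^+ n)).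
  by apply/funext => n; rewrite iter_tau0.
suff -> : ev (fun n => Per M (iter n tau1 x)) <-> ev (fun n => Per M ((x - 1) / 2 ^+ n)) by [].
apply: ev_ext => n; rewrite iter_tau1; exact: (@Per_shift R M _ 1).
Qed.

Lemma Bad_scale x k : Bad (x / 2 ^+ k) <-> Bad x.
Proof.
have e : ev (fun n => Per M (x / 2 ^+ k / 2 ^+ n)) <-> ev (fun n => Per M (x / 2 ^+ n)).
  rewrite -(ev_add (fun n => Per M (x / 2 ^+ n)) k).
  by apply: ev_ext => n; rewrite div2D addnC.
by rewrite /Bad /= e.
Qed.

Lemma exists_pow (x : R) : exists k, `|x| < 2 ^+ k.
Proof.
have := archi_boundP (normr_ge0 x); set m := Num.Def.archi_bound _ => h.
exists m; apply: (lt_le_trans h); rewrite -natrX ler_nat.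
exact: ltnW (ltn_expl m (ltnSn 1)).
Qed.

Lemma C_D : leb.-negligible Bad <-> {ae leb, forall x, Dp x}.
Proof.
split => [hB|].
- rewrite aeE; apply: negligibleS (negligibleU hB (@negl_aff R 1 (-1) Bad ltr01 hB)).
  move=> x /= nD; case: (pselect (Bad x)) => [|nb]; first by left.
  right; rewrite mul1r; apply: contrapT => nb1; apply: nD => _; split => //.
- rewrite aeE => hE.
  set E := ~` [set x | Dp x] in hE.
  have hk : forall k : nat, leb.-negligible
      ([set x | E ((2 ^+ k)^-1 * x + 0)] `|` [set x | E ((2 ^+ k)^-1 * x + 1)]).
    move=> k; apply: negligibleU; apply: negl_aff => //; by rewrite invr_gt0 exprn_gt0.
  apply: negligibleS (negligible_bigcup hk) => x Bx.
  have [k xk] := exists_pow x.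
  have k0 : (0 : R) < 2 ^+ k by rewrite exprn_gt0.
  exists k => //; rewrite /= addr0 [_ * x]mulrC.
  have Bk : Bad (x / 2 ^+ k) by rewrite Bad_scale.
  case: (leP 0 x) => x0.
  + left; rewrite /E /Dp /= => h.
    have I : `[0, 1[%classic (x / 2 ^+ k).
      have h1 : x / 2 ^+ k < 1.
        by rewrite ltr_pdivrMr // mul1r; rewrite ger0_norm in xk.
      by rewrite in01 h1 andbT divr_ge0 // ltW.
    by have [/(_ Bk)] := h I.
  + right; rewrite /E /Dp /= => h.
    have I : `[0, 1[%classic (x / 2 ^+ k + 1).
      rewrite in01; rewrite ltr0_norm // in xk.
      have : -1 < x / 2 ^+ k.
        rewrite ltr_pdivlMr // mulN1r ltrNl. exact: xk.
      have : x / 2 ^+ k < 0 by rewrite ltr_pdivrMr // mul0r.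
      by lra.
    by have [_] := h I; rewrite addrK; apply.
Qed.

Lemma shalf_lo (m : R) : 0 <= m < 2^-1 -> shalf m = m + 2^-1.
Proof.
move=> /andP[a b]; rewrite /shalf (@floor_def _ _ 0) ?subr0 //.
rewrite add0r /=; apply/andP; split; lra.
Qed.

Lemma shalf_hi (m : R) : 2^-1 <= m < 1 -> shalf m = m - 2^-1.
Proof.
move=> /andP[a b]; rewrite /shalf (@floor_def _ _ 1) /=.
  by rewrite (_ : (1%:~R : R) = 1) //; lra.
apply/andP; split; lra.
Qed.

Lemma sM_iff (z : R) : 0 <= z < 2^-1 -> (shalf @` M) z <-> M (z + 2^-1).
Proof.
move=> /andP[z0 z1]; split.
- move=> [m Mm mz]; subst z; have := Msub _ Mm; rewrite in01 => /andP[m0 m1].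
  case: (ltP m 2^-1) => mh.
  + by move: z1; rewrite shalf_lo ?m0 //; lra.
  + by rewrite shalf_hi ?mh // subrK.
- move=> h; exists (z + 2^-1) => //; rewrite shalf_hi ?addrK //.
  apply/andP; split; lra.
Qed.

Definition Gset := (M `&` shalf @` M) `|` (`[0, 1[%classic `\` (M `|` shalf @` M)).

Lemma key_s (z : R) : 0 <= z < 2^-1 -> ~ Gset z -> (~ M z <-> M (z + 2^-1)).
Proof.
move=> z01 nG; have /andP[z0 z1] := z01; split.
- move=> nM; apply/(sM_iff _ z01); apply: contrapT => nsM; apply: nG; right; split.
  + by rewrite in01 z0 /=; lra.
  + by case.
- by move=> h Mz; apply: nG; left; split => //; apply/(sM_iff _ z01).
Qed.

Lemma ev_tail (f : R -> R) (P : R -> Prop) y :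
  (exists N, forall n, (N <= n)%N -> forall k, P (iter (k + n).+1 f y)) <->
  ev (fun n => P (iter n f y)).
Proof.
split => -[N H].
- exists N.+1 => m Nm; have := H N (leqnn N) (m - N.+1)%N.
  by rewrite (_ : ((m - N.+1) + N).+1 = m)%N //; lia.
- by exists N => n Nn k; apply: H; lia.
Qed.

Lemma part0 x : 0 <= x < 1 ->
  (exists N, forall n, (N <= n)%N -> omega M (iter n tau0 x) = (fun _ => false))
  <-> ~ Bad x.
Proof.
move=> x01; rewrite /Bad /= -nnP.
rewrite (propext (@ev_ext _ (fun n => M (iter n tau0 x)) _)); last first.
  move=> n; rewrite -iter_tau0; apply: Per01 => //.
  elim: n => [//|n IH]; rewrite iterS; exact: tau01.
rewrite -ev_tail; split => -[N H]; exists N => n Nn.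
- move=> k; have := (omega_const _ _ _ _).1 (H n Nn) k.
  by rewrite cd_false -iterD iterS.
- apply/omega_const => k; rewrite cd_false -iterD -iterS; exact: H.
Qed.

Lemma iter01 f n (x : R) : (forall y, 0 <= y < 1 -> 0 <= f y < 1) ->
  0 <= x < 1 -> 0 <= iter n f x < 1.
Proof. by move=> hf x01; elim: n => [//|n IH]; rewrite iterS; apply: hf. Qed.

Lemma tau0_half (y : R) : 0 <= y < 1 -> 0 <= tau0 y < 2^-1.
Proof. by rewrite /tau0 /tau /= addr0; lra. Qed.

Lemma tau0_tau1 (y : R) : tau0 y + 2^-1 = tau1 y.
Proof. by rewrite /tau0 /tau1 /tau /=; lra. Qed.

Lemma part1 x : 0 <= x < 1 -> (forall n, ~ Gset (tau0 (iter n tau1 x))) ->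
  (exists N, forall n, (N <= n)%N -> omega M (iter n tau1 x) = (fun _ => true))
  <-> ~ Bad (x - 1).
Proof.
move=> x01 hG; rewrite /Bad /= -nnP.
have i01 n : 0 <= iter n tau1 x < 1 by apply: iter01 => // y; exact: tau01.
rewrite (propext (@ev_ext _ (fun n => M (iter n tau1 x)) _)); last first.
  move=> n; rewrite -(@Per_shift R M _ 1) /= -iter_tau1; exact: Per01.
rewrite -ev_tail; split => -[N H]; exists N => n Nn.
- move=> k; have := (omega_const _ _ _ _).1 (H n Nn) k.
  rewrite cd_true -iterD iterS -tau0_tau1 => h.
  exact: (key_s _ (tau0_half _ (i01 (k + n)%N)) (hG (k + n)%N)).1 h.
- apply/omega_const => k; rewrite cd_true -iterD.
  apply/(key_s _ (tau0_half _ (i01 (k + n)%N)) (hG (k + n)%N)).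
  by rewrite tau0_tau1 -iterS; apply: H.
Qed.

Lemma ae_mono (P Q : R -> Prop) : (forall x, P x -> Q x) ->
  {ae leb, forall x, P x} -> {ae leb, forall x, Q x}.
Proof. by move=> H; rewrite !aeE; apply: negligibleS => x /= nQ /H. Qed.

Lemma ae_iff_off (T : set R) (P Q : R -> Prop) : leb.-negligible T ->
  (forall x, ~ T x -> (P x <-> Q x)) ->
  ({ae leb, forall x, P x} <-> {ae leb, forall x, Q x}).
Proof.
move=> hT H; split; rewrite !aeE => h; apply: negligibleS (negligibleU h hT) => x /= nQ;
  (case: (pselect (T x)) => [?|nT]; [by right|left]).
- by move=> hP; apply: nQ; rewrite -H.
- by move=> hP; apply: nQ; rewrite H.
Qed.

Lemma tw_eq n (x : R) : tau_word (rcons (nseq n true) false) x = tau0 (iter n tau1 x).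
Proof. by rewrite -cats1 /tau_word foldl_cat /= -/(tau_word _ x) tau_word_nseq. Qed.

Definition Vp x := `[0, 1[%classic x ->
      (exists N : nat, forall n : nat, (N <= n)%N ->
         omega M (iter n (@tau0 R) x) = (fun _ => false)) /\
      (exists N : nat, forall n : nat, (N <= n)%N ->
         omega M (iter n (@tau1 R) x) = (fun _ => true)).

Hypothesis hG : leb.-negligible Gset.

Lemma v_D : {ae leb, forall x, Vp x} <-> {ae leb, forall x, Dp x}.
Proof.
pose T5 := \bigcup_n [set x | Gset (tau_word (rcons (nseq n true) false) x)].
apply: (@ae_iff_off T5).
  by apply: negligible_bigcup => n; exact: negl_tw.
move=> x nT; have hGx : forall n, ~ Gset (tau0 (iter n tau1 x)).
  by move=> n h; apply: nT; exists n => //=; rewrite tw_eq.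
rewrite /Vp /Dp; split => h Ix; have x01 := (@in01 R x).1 Ix; have [a b] := h Ix.
- by split; [rewrite -part0 | rewrite -part1].
- by split; [rewrite part0 | rewrite part1].
Qed.

Definition VIp x := `[0, 1[%classic x ->
      forall eta : seq bool,
        Aset M x (wcat eta (fun _ => false)) /\
        Aset M x (wcat eta (fun _ => true)).

Lemma wcat_nil (w : nat -> bool) : wcat [::] w = w.
Proof. by apply/funext => k; rewrite /wcat /= subn0. Qed.

Lemma omega_mono b y N n : (N <= n)%N ->
  omega M (iter N (tau b) y) = (fun _ => b) -> omega M (iter n (tau b) y) = (fun _ => b).
Proof.
move=> Nn /omega_const H; apply/omega_const => k.
by rewrite -iterD -(subnK Nn) addnA iterD; apply: H.
Qed.

Lemma Aset_const b (x : R) : Aset M x (fun _ => b) ->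
  exists N, forall n, (N <= n)%N -> omega M (iter n (tau b) x) = (fun _ => b).
Proof.
move=> [eta _ E]; exists (size eta) => n Nn; apply: (@omega_mono b x (size eta) n Nn).
have He : eta = nseq (size eta) b.
  apply/all_pred1P/(all_nthP false) => k kn /=.
  by have := congr1 (fun f => f k) E; rewrite /wcat kn /= => ->.
rewrite -tau_word_nseq -He; apply/funext => k.
by have := congr1 (fun f => f (k + size eta)%N) E; rewrite /wcat ltnNge leq_addl /= addnK.
Qed.

Lemma wcat_pad eta N (b : bool) :
  wcat (eta ++ nseq N b) (fun _ => b) = wcat eta (fun _ => b).
Proof.
apply/funext => k; rewrite /wcat size_cat size_nseq nth_cat.
case: (ltnP k (size eta)) => h1; first by rewrite ifT //; lia.
case: ifP => // h2; rewrite nth_nseq; case: ifP => //; lia.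
Qed.

Lemma pad_Aset eta b (x : R) N :
  omega M (iter N (tau b) (tau_word eta x)) = (fun _ => b) ->
  Aset M x (wcat eta (fun _ => b)).
Proof.
move=> H; exists (eta ++ nseq N b) => //.
by rewrite /tau_word foldl_cat -/(tau_word _ x) -/(tau_word _ _) tau_word_nseq H wcat_pad.
Qed.

Lemma vi_v : {ae leb, forall x, VIp x} <-> {ae leb, forall x, Vp x}.
Proof.
split.
- apply: ae_mono => x h Ix; have [h0 h1] := h Ix [::]; rewrite !wcat_nil in h0 h1.
  by split; [exact: Aset_const h0|exact: Aset_const h1].
- rewrite !aeE => hV.
  pose T6 := \bigcup_k [set x | match unpickle k with
                 | Some w => (~` [set x | Vp x]) (tau_word w x) | None => False end].
  have hT6 : leb.-negligible T6.
    apply: negligible_bigcup => k; case: (unpickle k) => [w|].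
    + exact: negl_tw.
    + by apply: negligibleS (negligible_set0 leb) => ?.
  apply: negligibleS hT6 => x /= nVI; apply: contrapT => nT; apply: nVI => Ix eta.
  have Veta : Vp (tau_word eta x).
    apply: contrapT => nV; apply: nT; exists (pickle eta) => //.
    by rewrite /mkset pickleK.
  have [[N0 H0] [N1 H1]] := Veta (@tau_word01 R eta x ((@in01 R x).1 Ix)).
  split; [apply: (@pad_Aset _ _ _ N0) | apply: (@pad_Aset _ _ _ N1)]; [exact: H0|exact: H1].
Qed.

End Main.

Theorem proposition3p16 (R : realType) (M : set R) :
  measurable M -> M `<=` `[0, 1[%classic ->
  (@lebesgue_measure R).-negligible (M `&` shalf @` M) ->
  (@lebesgue_measure R).-negligible (`[0, 1[%classic `\` (M `|` shalf @` M)) ->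
  [<->
   (* (i) *)
   {ae @lebesgue_measure R, forall x : R,
      (fun n : nat => phihat M (x / 2 ^+ n)) @ \oo --> (1 : R)};
   (* (ii) *)
   (@lebesgue_measure R).-negligible
      (~` \bigcup_(n in [set n : nat | (0 < n)%N]) dil (2 ^+ n) (Fset M));
   (* (iii) *)
   {ae @lebesgue_measure R, forall x : R,
      (fun n : nat => Per_fun M (x / 2 ^+ n)) @ \oo --> (1%E : \bar R)};
   (* (iv) *)
   {ae @lebesgue_measure R, forall x : R, `[0, 1[%classic x ->
      (fun n : nat => Per_fun M (iter n (@tau0 R) x)) @ \oo --> (1%E : \bar R) /\
      (fun n : nat => Per_fun M (iter n (@tau1 R) x)) @ \oo --> (1%E : \bar R)};
   (* (v) *)
   {ae @lebesgue_measure R, forall x : R, `[0, 1[%classic x ->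
      (exists N : nat, forall n : nat, (N <= n)%N ->
         omega M (iter n (@tau0 R) x) = (fun _ => false)) /\
      (exists N : nat, forall n : nat, (N <= n)%N ->
         omega M (iter n (@tau1 R) x) = (fun _ => true))};
   (* (vi) *)
   {ae @lebesgue_measure R, forall x : R, `[0, 1[%classic x ->
      forall eta : seq bool,
        Aset M x (wcat eta (fun _ => false)) /\
        Aset M x (wcat eta (fun _ => true))}
  ].
Proof.
move=> mM Msub h1 h2.
have hG : (@lebesgue_measure R).-negligible (@Gset R M) by apply: negligibleU.
have e0 := @i_C R M. have e1 := @ii_C R M. have e2 := @iii_C R M Msub.
have e3 := @iv_D R M Msub. have eCD := @C_D R M. have e4 := @v_D R M Msub hG.
have e5 := @vi_v R M.
tfae.
- by move=> h; apply/e1/e0.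
- by move=> h; apply/e2/e1.
- by move=> h; apply/e3/eCD/e2.
- by move=> h; apply/e4/e3.
- by move=> h; apply/e5.
- by move=> h; apply/e0/eCD/e4/e5.
Qed.
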